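(* On the carrier $\mathbb{F}_2^5$, with indices taken modulo $5$, define $((x_i)_{i=1}^5\diamond(y_i)_{i=1}^5)_i=1-x_{i+1}y_{i-1}$. This finite magma satisfies $\mathrm{x}\simeq(\mathrm{y}\diamond\mathrm{x})\diamond(\mathrm{x}\diamond(\mathrm{z}\diamond\mathrm{y}))$ but does not satisfy $\mathrm{x}\simeq(\mathrm{x}\diamond\mathrm{x})\diamond(\mathrm{x}\diamond\mathrm{x})$. Consequently the first law does not imply the second, even for finite magmas.
   Context: $\mathbb{F}_2$ is the field with two elements; arithmetic in each coordinate is in $\mathbb{F}_2$. A magma satisfies a law if the identity holds for all assignments of variables. *)

(* Defs.v *)
From mathcomp Require Import all_boot all_algebra.
Set Implicit Arguments. Unset Strict Implicit. Unset Printing Implicit Defensive.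
Import GRing.Theory.
Local Open Scope ring_scope.

(* Carrier F_2^5: functions from the index set Z/5 (represented by 'I_5,
   i.e. indices 0..4 instead of 1..5) to the prime field 'F_2. *)
Definition F25 := {ffun 'I_5 -> 'F_2}.

Definition diamond (x y : F25) : F25 :=
  [ffun i : 'I_5 => 1 - x (ordS i) * y (ord_pred i)].

Definition satisfies_law1 (T : Type) (op : T -> T -> T) : Prop :=
  forall x y z : T, x = op (op y x) (op x (op z y)).

Definition satisfies_law2 (T : Type) (op : T -> T -> T) : Prop :=
  forall x : T, x = op (op x x) (op x x).

(* Main.v *)
Require Import Defs.
From mathcomp Require Import all_boot all_algebra.
Import GRing.Theory.
Local Open Scope ring_scope.

Lemma F2_cases (a : 'F_2) : a = 0 \/ a = 1.
Proof. case: a => [[|[|n]]] H; [left|right|]; try exact: val_inj. by []. Qed.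

Lemma alg (a b c : 'F_2) : a = 1 - (1 - b * a) * (1 - a * (1 - c * b)).
Proof.
by case: (F2_cases a) => ->; case: (F2_cases b) => ->; case: (F2_cases c) => ->;
  apply/val_inj.
Qed.

Lemma idx1 (i : 'I_5) : ord_pred (ordS i) = i.
Proof. apply/val_inj; case: i => [[|[|[|[|[|]]]]]] //. Qed.
Lemma idx2 (i : 'I_5) : ordS (ord_pred i) = i.
Proof. apply/val_inj; case: i => [[|[|[|[|[|]]]]]] //. Qed.
Lemma idx3 (i : 'I_5) : ord_pred (ord_pred (ord_pred i)) = ordS (ordS i).
Proof. apply/val_inj; case: i => [[|[|[|[|[|]]]]]] //. Qed.

Theorem mainTheorem18 :
  satisfies_law1 diamond /\ ~ satisfies_law2 diamond /\
  (exists (T : finType) (op : T -> T -> T),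
      satisfies_law1 op /\ ~ satisfies_law2 op).
Proof.
have L1 : satisfies_law1 diamond.
  move=> x y z; apply/ffunP => i; rewrite !ffunE idx1 idx2 idx3.
  exact: alg.
have L2 : ~ satisfies_law2 diamond.
  move=> /(_ [ffun i : 'I_5 => if i == ord0 then 1 else 0 : 'F_2]).
  move/ffunP/(_ ord0); rewrite !ffunE /=.
  by move/(congr1 val).
split; [exact L1 | split; [exact L2|]].
by exists F25, diamond.
Qed.
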